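(* Let $n\ge 2$ and fix positive integers $d_1,\dots,d_n$. Consider minimizing $(f_n-f_1)^2$ over real vectors $(f_1,\dots,f_n)$ subject to \[ \sum_{i=1}^n f_i d_i=0,\qquad \sum_{i=1}^n f_i^2 d_i=1, \] and $f_1\le f_k\le f_n$ for all $k$. If $(f_1,\dots,f_n)$ is a minimizer, then for every $k$ one has $f_k=f_1$ or $f_k=f_n$. *)

(* Defs.v *)
(* Real numbers are modelled by an arbitrary real closed
   field R (the statement is first-order, so this is a faithful
   generalisation of the case R = the reals). *)
From HB Require Import structures.
From mathcomp Require Import all_boot all_order all_algebra.
Set Implicit Arguments. Unset Strict Implicit. Unset Printing Implicit Defensive.
Import Order.TTheory GRing.Theory Num.Theory.
Local Open Scope ring_scope.

(* Vectors (f_1,...,f_n) are functions nat -> R; only indices 1..n matter.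
   Weights d_1,...,d_n are natural numbers (assumed positive in the theorem). *)

Definition feasible (R : rcfType) (n : nat) (d : nat -> nat) (f : nat -> R) : Prop :=
  [/\ \sum_(1 <= i < n.+1) f i * (d i)%:R = 0,
      \sum_(1 <= i < n.+1) f i ^+ 2 * (d i)%:R = 1
    & forall k : nat, (1 <= k <= n)%N -> f 1%N <= f k <= f n].

Definition objective (R : rcfType) (n : nat) (f : nat -> R) : R :=
  (f n - f 1%N) ^+ 2.

Definition is_minimizer (R : rcfType) (n : nat) (d : nat -> nat) (f : nat -> R) : Prop :=
  feasible n d f /\ forall g : nat -> R, feasible n d g -> objective n f <= objective n g.

(* Main.v *)
Require Import Defs.
From HB Require Import structures.
From mathcomp Require Import all_boot all_order all_algebra.
From mathcomp Require Import ring lra.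
Import Order.TTheory GRing.Theory Num.Theory.
Local Open Scope ring_scope.

Lemma sum_ind (R : rcfType) (n k : nat) (x : R) : (1 <= k <= n)%N ->
  \sum_(1 <= i < n.+1) (if i == k then x else 0) = x.
Proof.
move=> hk; rewrite (bigD1_seq k) ?mem_index_iota ?ltnS ?iota_uniq //= eqxx.
by rewrite big1 ?addr0 // => i /negbTE ->.
Qed.

Lemma sum_upd (R : rcfType) n (d : nat -> nat) (f : nat -> R) k c (u : R -> R) :
 (1 <= k <= n)%N ->
 \sum_(1 <= i < n.+1) u (if i == k then c else f i) * (d i)%:R =
 \sum_(1 <= i < n.+1) u (f i) * (d i)%:R + (u c - u (f k)) * (d k)%:R.
Proof.
move=> hk; rewrite -(@sum_ind R n k ((u c - u (f k)) * (d k)%:R) hk) -big_split /=.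
apply: eq_bigr => i _; case: eqP => [->|_]; last by rewrite addr0.
ring.
Qed.

Lemma sum_lin (R : rcfType) n (d : nat -> nat) (h : nat -> R) (m s : R) :
  \sum_(1 <= i < n.+1) (h i - m) / s * (d i)%:R =
  (\sum_(1 <= i < n.+1) h i * (d i)%:R - m * \sum_(1 <= i < n.+1) (d i)%:R) / s.
Proof.
rewrite mulr_sumr -sumrB mulr_suml; apply: eq_bigr => i _; ring.
Qed.

Lemma sum_sq (R : rcfType) n (d : nat -> nat) (h : nat -> R) (m s : R) :
  \sum_(1 <= i < n.+1) ((h i - m) / s) ^+ 2 * (d i)%:R =
  (\sum_(1 <= i < n.+1) h i ^+ 2 * (d i)%:R
   - (2 * m) * \sum_(1 <= i < n.+1) h i * (d i)%:R
   + m ^+ 2 * \sum_(1 <= i < n.+1) (d i)%:R) * s^-1 ^+ 2.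
Proof.
rewrite !mulr_sumr -sumrB -big_split /= mulr_suml; apply: eq_bigr => i _; ring.
Qed.

Lemma improve (R : rcfType) (n : nat) (d : nat -> nat) (f : nat -> R) (k : nat) (c : R) :
  (1 < n)%N -> feasible n d f -> (1 <= k <= n)%N -> k != 1%N -> k != n ->
  f 1%N <= c <= f n -> f 1%N < f n ->
  (0 : R) < \sum_(1 <= i < n.+1) (d i)%:R ->
  0 < (d k)%:R * (c - f k) * (c + f k - (d k)%:R * (c - f k) / \sum_(1 <= i < n.+1) (d i)%:R) ->
  exists g, feasible n d g /\ objective n g < objective n f.
Proof.
move=> hn [S1 S2 ord] hk k1 kn /andP[ca cb] ab.
set D := \sum_(1 <= i < n.+1) (d i)%:R => hD.
set w := (d k)%:R => hpos.
set m := w * (c - f k) / D.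
set s2 := 1 + w * (c - f k) * (c + f k - m).
have hs2 : 1 < s2 by rewrite /s2 ltrDl.
have hs2p : 0 < s2 by lra.
set s := Num.sqrt s2.
have hs : 0 < s by rewrite sqrtr_gt0.
have ss : s ^+ 2 = s2 by rewrite sqr_sqrtr // ltW.
pose f' i := if i == k then c else f i.
have E1 : \sum_(1 <= i < n.+1) f' i * (d i)%:R = (c - f k) * w.
  by have := @sum_upd R n d f k c (fun x => x) hk; rewrite /= S1 add0r.
have E2 : \sum_(1 <= i < n.+1) f' i ^+ 2 * (d i)%:R = 1 + (c ^+ 2 - f k ^+ 2) * w.
  by have := @sum_upd R n d f k c (fun x => x ^+ 2) hk; rewrite /= S2.
have f'1 : f' 1%N = f 1%N by rewrite /f' eq_sym (negbTE k1).
have f'n : f' n = f n by rewrite /f' eq_sym (negbTE kn).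
have hD0 : D != 0 by rewrite gt_eqF.
exists (fun i => (f' i - m) / s); split; first split.
- rewrite sum_lin E1 /m; apply/eqP; rewrite mulf_eq0; apply/orP; left.
  apply/eqP; rewrite -/D; field; exact: hD0.
- rewrite sum_sq E1 E2 -/D exprVn ss /m.
  apply: (@mulIf _ s2); first by rewrite gt_eqF.
  rewrite mulrVK ?unitfE ?gt_eqF // mul1r /s2 /m; field; exact: hD0.
- move=> j hj; have /andP[h1 h2] := ord j hj.
  have hf : f 1%N <= f' j <= f n by rewrite /f'; case: eqP => _; rewrite ?ca ?cb ?h1 ?h2.
  case/andP: hf => g1 g2.
  rewrite f'1 f'n !ler_wpM2r ?invr_ge0 ?(ltW hs) ?lerD2r //.
- rewrite /objective f'1 f'n.
  have -> : (f n - m) / s - (f 1%N - m) / s = (f n - f 1%N) / s by ring.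
  rewrite expr_div_n ss ltr_pdivrMr // -subr_gt0.
  have hab : 0 < (f n - f 1%N) ^+ 2 by rewrite exprn_gt0 // subr_gt0.
  have -> : (f n - f 1%N) ^+ 2 * s2 - (f n - f 1%N) ^+ 2 = (f n - f 1%N) ^+ 2 * (s2 - 1) by ring.
  by rewrite mulr_gt0 // subr_gt0.
Qed.

Theorem proposition2p1 (R : rcfType) (n : nat) (hn : (2 <= n)%N)
  (d : nat -> nat) (hd : forall i : nat, (1 <= i <= n)%N -> (0 < d i)%N)
  (f : nat -> R) :
  is_minimizer n d f ->
  forall k : nat, (1 <= k <= n)%N -> f k = f 1%N \/ f k = f n.
Proof.
move=> [[S1 S2 ord] hmin] k hk.
have [ek1|nk1] := eqVneq (f k) (f 1%N); first by left.
have [ekn|nkn] := eqVneq (f k) (f n); first by right.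
exfalso.
have /andP[h1 h2] := ord k hk.
have ha : f 1%N < f k by rewrite lt_neqAle eq_sym nk1 h1.
have hb : f k < f n by rewrite lt_neqAle nkn h2.
have k1 : k != 1%N by apply: contra_neq nk1 => ->.
have kn : k != n by apply: contra_neq nkn => ->.
have h1n : (1 <= 1 <= n)%N by rewrite /= ltnW.
set D := \sum_(1 <= i < n.+1) (d i)%:R : R.
set w := (d k)%:R : R.
have hw : 0 < w by rewrite ltr0n hd.
have hDw : w + 1 <= D.
  rewrite -{1}(@sum_ind R n k w hk) -{1}(@sum_ind R n 1%N (1 : R) h1n).
  rewrite /D -big_split /=.
  apply: ler_sum => i hi.
  have [->|ik] := eqVneq i k; first by rewrite (negbTE k1) addr0.
  rewrite add0r.
  have [->|i1] := eqVneq i 1%N; first by rewrite ?eqxx ler1n hd.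
  by rewrite ?(negbTE i1) ler0n.
have hD : 0 < D by lra.
have key : forall c, f 1%N <= c <= f n ->
  0 < w * (c - f k) * (c + f k - w * (c - f k) / D) -> False.
  move=> c hc hp.
  have [g [hg lt]] := @improve R n d f k c hn (And3 S1 S2 ord) hk k1 kn hc
    (lt_trans ha hb) hD hp.
  by have := hmin g hg; rewrite leNgt lt.
have [fk0|fk0] := lerP 0 (f k).
- apply: (key (f n)); first by rewrite lexx ltW // (lt_trans ha hb).
  have ht : w * (f n - f k) / D < f n - f k.
    by rewrite ltr_pdivrMr //; nra.
  apply: mulr_gt0; first by apply: mulr_gt0 => //; rewrite subr_gt0.
  lra.
- apply: (key (f 1%N)); first by rewrite lexx ltW // (lt_trans ha hb).
  have ht : f 1%N - f k < w * (f 1%N - f k) / D.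
    by rewrite ltr_pdivlMr //; nra.
  rewrite -mulrA pmulr_lgt0 //; nra.
Qed.
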